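(* Let $S$ be a pogroup and $B$ a poset. If $f:X\to B$ is a monotone map which is topological as a functor (posets regarded as categories), then $f$, regarded as an $S$-poset map with trivial action on both $X$ and $B$, is a regular injective object of $\mathbf{Pos}\text{-}S/B$.
   Context: A pogroup is a group with a partial order compatible with multiplication (a pomonoid that is a group). $\mathbf{Pos}\text{-}S$ is the category of right $S$-posets and action-preserving monotone maps; $\mathbf{Pos}\text{-}S/B$ its slice over $B$; trivial action means $as=a$ for all $a,s$. Regular injective means injective with respect to order-embeddings. A poset is a category with an arrow $a\to a'$ iff $a\le a'$. For a functor $G:\mathcal A\to\mathcal X$, a source $(f_i:A\to A_i)_{i\in I}$ is $G$-initial if for every source $(g_i:C\to A_i)$ and $\mathcal X$-morphism $h:GC\to GA$ with $Gg_i=Gf_i h$ for all $i$ there is a unique $\bar h:C\to A$ with $G\bar h=h$ and $g_i=f_i\bar h$; $G$ is topological if every $G$-structured source $(X\to GA_i)_{i\in I}$ has a unique $G$-initial lift (a source $(A\to A_i)$ with $GA=X$ mapped by $G$ to the given source). *)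

(* Defs.v *)
Set Implicit Arguments.
Unset Strict Implicit.

Record poset := Poset {
  pcar :> Type;
  ple : pcar -> pcar -> Prop;
  ple_refl : forall x, ple x x;
  ple_trans : forall x y z, ple x y -> ple y z -> ple x z;
  ple_antisym : forall x y, ple x y -> ple y x -> x = y }.
Arguments ple {p}.

Definition monotone (P Q : poset) (f : P -> Q) : Prop :=
  forall x y, ple x y -> ple (f x) (f y).

Record pogroup := Pogroup {
  gpo :> poset;
  gmul : gpo -> gpo -> gpo;
  gone : gpo;
  ginv : gpo -> gpo;
  gmulA : forall x y z, gmul x (gmul y z) = gmul (gmul x y) z;
  gmul1l : forall x, gmul gone x = x;
  gmul1r : forall x, gmul x gone = x;
  gmulVl : forall x, gmul (ginv x) x = gone;
  gmulVr : forall x, gmul x (ginv x) = gone;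
  gle_mull : forall x y z, ple x y -> ple (gmul z x) (gmul z y);
  gle_mulr : forall x y z, ple x y -> ple (gmul x z) (gmul y z) }.

Record sposet (S : pogroup) := SPoset {
  spo :> poset;
  act : spo -> S -> spo;
  act_one : forall a, act a (gone S) = a;
  act_mul : forall a s t, act (act a s) t = act a (gmul s t);
  act_mono_l : forall a b s, ple a b -> ple (act a s) (act b s);
  act_mono_r : forall a s t, ple s t -> ple (act a s) (act a t) }.
Arguments act {S s0} _ _.

Definition spos_map (S : pogroup) (A C : sposet S) (h : A -> C) : Prop :=
  monotone h /\ forall a s, h (act a s) = act (h a) s.

Record slice_obj (S : pogroup) (B : sposet S) := SliceObj {
  sdom : sposet S;
  sstr : sdom -> B;
  sstr_map : spos_map sstr }.
Arguments sdom {S B}.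
Arguments sstr {S B} _ _.

Definition slice_map (S : pogroup) (B : sposet S) (A C : slice_obj B)
  (h : sdom A -> sdom C) : Prop :=
  spos_map h /\ forall a, sstr C (h a) = sstr A a.

Definition order_embedding (P Q : poset) (m : P -> Q) : Prop :=
  forall x y, ple (m x) (m y) <-> ple x y.

(** Regular injectivity: injectivity with respect to (slice) morphisms
    that are order-embeddings. *)
Definition regular_injective (S : pogroup) (B : sposet S) (E : slice_obj B) : Prop :=
  forall (A A' : slice_obj B) (m : sdom A -> sdom A') (h : sdom A -> sdom E),
    slice_map m -> order_embedding m -> slice_map h ->
    exists k : sdom A' -> sdom E, slice_map k /\ forall a, k (m a) = h a.

Definition trivial_sposet (S : pogroup) (P : poset) : sposet S.
Proof.
  refine (@SPoset S P (fun a _ => a) _ _ _ _); intros; auto using ple_refl.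
Defined.

Lemma trivial_spos_map (S : pogroup) (X B : poset) (f : X -> B) :
  monotone f -> @spos_map S (trivial_sposet S X) (trivial_sposet S B) f.
Proof. intros Hf; split; [exact Hf | reflexivity]. Qed.

Definition trivial_slice_obj (S : pogroup) (X B : poset) (f : X -> B)
  (Hf : monotone f) : slice_obj (trivial_sposet S B) :=
  @SliceObj S (trivial_sposet S B) (trivial_sposet S X) f (trivial_spos_map S Hf).

(** A G-structured source is an object b of B with arrows b -> f (x i),
    i.e. b <= f (x i); a lift is an x with f x = b and x <= x i for all i
    (the arrows being unique). *)
Definition G_initial (X B : poset) (f : X -> B) (I : Type) (xs : I -> X) (x : X) : Prop :=
  (forall i, ple x (xs i)) /\
  forall c : X, (forall i, ple c (xs i)) -> ple (f c) (f x) -> ple c x.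

Definition topological (X B : poset) (f : X -> B) : Prop :=
  forall (b : B) (I : Type) (xs : I -> X),
    (forall i, ple b (f (xs i))) ->
    exists x, (f x = b /\ G_initial f xs x) /\
      forall x', f x' = b /\ G_initial f xs x' -> x' = x.

(* Main.v *)
Require Import Defs.
From Stdlib Require Import ClassicalEpsilon.

Theorem mainTheorem9 (S : pogroup) (X B : poset) (f : X -> B)
  (Hf : monotone f) :
  topological f ->
  regular_injective (trivial_slice_obj S Hf).
Proof.
  intros Htop A A' m h [[Hmmono Hmact] Hmstr] Hemb [[Hhmono Hhact] Hhstr].
  simpl in *.
  set (p := sstr A') in *.
  destruct (sstr_map A') as [Hpmono Hpact].
  destruct (sstr_map A) as [Hqmono Hqact].
  assert (Hsrc : forall a' : sdom A',
    forall i : {a : sdom A | ple a' (m a)}, ple (p a') (f (h (proj1_sig i)))).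
  { intros a' [a Ha]; simpl. rewrite Hhstr. rewrite <- Hmstr. apply Hpmono; exact Ha. }
  pose (K := fun a' => constructive_indefinite_description _
        (Htop (p a') _ (fun i : {a : sdom A | ple a' (m a)} => h (proj1_sig i)) (Hsrc a'))).
  exists (fun a' => proj1_sig (K a')).
  assert (Kspec : forall a', f (proj1_sig (K a')) = p a' /\
     (forall a, ple a' (m a) -> ple (proj1_sig (K a')) (h a)) /\
     (forall c : X, (forall a, ple a' (m a) -> ple c (h a)) ->
         ple (f c) (p a') -> ple c (proj1_sig (K a')))).
  { intro a'. destruct (proj2_sig (K a')) as [[Hfx [H1 H2]] _].
    split; [exact Hfx|]. split.
    - intros a Ha. exact (H1 (exist _ a Ha)).
    - intros c Hc Hfc. apply H2.
      + intros [a Ha]. exact (Hc a Ha).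
      + rewrite Hfx; exact Hfc. }
  split; [split; [split|]|].
  - intros a1 a2 H12. destruct (Kspec a1) as [E1 [L1 _]].
    destruct (Kspec a2) as [E2 [_ I2]]. apply I2.
    + intros a Ha. apply L1. eapply ple_trans; eauto.
    + rewrite E1. apply Hpmono; exact H12.
  - intros a' s. simpl.
    destruct (Kspec a') as [E1 [L1 I1]].
    destruct (Kspec (act a' s)) as [E2 [L2 I2]].
    assert (Hps : p (act a' s) = p a') by (rewrite Hpact; reflexivity).
    apply ple_antisym.
    + apply I1.
      * intros a Ha. rewrite <- (Hhact a s). apply L2.
        rewrite Hmact. apply act_mono_l. exact Ha.
      * rewrite E2, Hps. apply ple_refl.
    + apply I2.
      * intros a Ha. rewrite <- (Hhact a (ginv s)). apply L1.
        rewrite Hmact.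
        rewrite <- (act_one a'). rewrite <- (gmulVr s). rewrite <- act_mul.
        apply act_mono_l. exact Ha.
      * rewrite E1, Hps. apply ple_refl.
  - intros a'. simpl. destruct (Kspec a') as [E _]. exact E.
  - intros a0. destruct (Kspec (m a0)) as [E [L I]].
    apply ple_antisym.
    + apply L. apply ple_refl.
    + apply I.
      * intros a Ha. apply Hhmono. apply Hemb. exact Ha.
      * rewrite Hhstr, <- Hmstr. apply ple_refl.
Qed.
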